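(* The relations $\equiv_{\mathrm{lps}}$ and $\equiv_{\mathrm{rps}}$ are congruences on the free monoid $\mathcal{A}^*$.
   Context: Let $\mathcal{A}=\{1<2<3<\cdots\}$ be the positive integers viewed as a totally ordered alphabet. An lPS tableau is a finite (possibly empty) sequence of nonempty bottom-justified columns of boxes filled with elements of $\mathcal{A}$, such that the entries of each column are strictly decreasing from top to bottom and the bottom entries of the columns form a weakly increasing sequence from left to right. An rPS tableau is defined in the same way but with columns weakly decreasing from top to bottom and the bottom row strictly increasing from left to right. Right insertion of a symbol $a$ into an lPS tableau $B$: if $a$ is greater than or equal to every entry of the bottom row, append a new column consisting of $a$ at the right end; otherwise, let $z$ be the leftmost bottom-row entry with $z>a$ and put $a$ in a new box at the bottom of the column of $z$ (the previous entries of that column move up one box). Right insertion into an rPS tableau is the same except that a new column is created iff $a$ is strictly greater than every bottom-row entry, and otherwise $z$ is the leftmost bottom-row entry with $z\geq a$. For a word $w=w_1\cdots w_k$, $\mathfrak{R}_\ell(w)$ (resp. $\mathfrak{R}_r(w)$) is obtained by starting with the empty lPS (resp. rPS) tableau and right-inserting $w_1,\dots,w_k$ in order. Define $u\equiv_{\mathrm{lps}}v\iff\mathfrak{R}_\ell(u)=\mathfrak{R}_\ell(v)$ and $u\equiv_{\mathrm{rps}}v\iff\mathfrak{R}_r(u)=\mathfrak{R}_r(v)$ for $u,v\in\mathcal{A}^*$. *)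

(* Defs.v *)
From mathcomp Require Import all_boot.
Set Implicit Arguments. Unset Strict Implicit. Unset Printing Implicit Defensive.

(* Alphabet A = positive integers, represented as nat (words are required to
   have all letters > 0 where quantified).
   A PS tableau is a sequence of columns (left to right); each column is a
   [seq nat] listed from BOTTOM to TOP, so [head] is the bottom-row entry and
   inserting a new box at the bottom of a column is [cons]. *)

Definition word := seq nat.
Definition column := seq nat.
Definition tableau := seq column.

Fixpoint rinsert_l (a : nat) (B : tableau) : tableau :=
  match B with
  | [::] => [:: [:: a]]
  | c :: B' => if a < head 0 c then (a :: c) :: B' else c :: rinsert_l a B'
  end.

Fixpoint rinsert_r (a : nat) (B : tableau) : tableau :=
  match B with
  | [::] => [:: [:: a]]
  | c :: B' => if a <= head 0 c then (a :: c) :: B' else c :: rinsert_r a B'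
  end.

Definition Rl (w : word) : tableau := foldl (fun B a => rinsert_l a B) [::] w.
Definition Rr (w : word) : tableau := foldl (fun B a => rinsert_r a B) [::] w.

Definition lps_equiv (u v : word) : Prop := Rl u = Rl v.
Definition rps_equiv (u v : word) : Prop := Rr u = Rr v.

Definition is_word (w : word) : bool := all (fun x => 0 < x) w.

Definition congruence_on_words (R : word -> word -> Prop) : Prop :=
  [/\ (forall u, is_word u -> R u u),
      (forall u v, is_word u -> is_word v -> R u v -> R v u),
      (forall u v w, is_word u -> is_word v -> is_word w ->
                     R u v -> R v w -> R u w)
    & (forall u v w w', is_word u -> is_word v -> is_word w -> is_word w' ->
                        R u v -> R (w ++ u ++ w') (w ++ v ++ w'))].

(* Main.v *)
Require Import Defs.
From mathcomp Require Import all_boot.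
From mathcomp Require Import zify.

Fixpoint ins (r : rel nat) (a : nat) (B : tableau) : tableau :=
  match B with
  | [::] => [:: [:: a]]
  | c :: B' => if r a (head 0 c) then (a :: c) :: B' else c :: ins r a B'
  end.

Fixpoint bump (r : rel nat) (T : tableau) (S : column) {struct T} : tableau :=
  match S with
  | [::] => T
  | m :: _ =>
    match T with
    | [::] => [:: S]
    | c :: T' => (filter (fun y => r y m) c ++ S) :: bump r T' (filter (fun y => ~~ r y m) c)
    end
  end.

Fixpoint valid (r : rel nat) (T : tableau) : bool :=
  match T with
  | [::] => true
  | c :: T' => [&& c != [::], sorted r c,
                 (if T' is c' :: _ then ~~ r (head 0 c') (head 0 c) else true)
               & valid r T']
  end.

Definition F (r : rel nat) (T : tableau) (u : word) : tableau :=
  foldl (fun B a => ins r a B) T u.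

Set Implicit Arguments. Unset Strict Implicit.
Section Gen.

Lemma low_nil (r : rel nat) (rt : transitive r) h t m :
  sorted r (h :: t) -> ~~ r h m ->
  filter (fun y => r y m) (h :: t) = [::] /\ filter (fun y => ~~ r y m) (h :: t) = h :: t.
Proof.
move=> Hp Hn.
have Hall : all (fun y => ~~ r y m) (h :: t).
  rewrite /= Hn /=; apply/allP => y Hy.
  have := order_path_min rt Hp => /allP /(_ y Hy) Hhy.
  apply/negP => Hym; move/negP: Hn; apply; exact: rt Hhy Hym.
split.
  apply/eqP; apply/negPn; rewrite -(has_filter (fun y => r y m)) -all_predC; exact: Hall.
by apply/all_filterP.
Qed.

Lemma low_nil' (r : rel nat) (rt : transitive r) h t m :
  sorted r (h :: t) -> ~~ r h m ->
  filter (fun y => r y m) t = [::] /\ filter (fun y => ~~ r y m) t = t.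
Proof.
move=> Hp Hn; have [] := low_nil rt Hp Hn; rewrite /= (negbTE Hn).
by move=> -> [->].
Qed.

Lemma comm (r : rel nat) (rt : transitive r)
  (nrt : forall x y z, ~~ r x y -> ~~ r y z -> ~~ r x z) T S x :
  valid r T -> bump r (ins r x T) S = ins r x (bump r T S).
Proof.
elim: T S => [|c T' IH] [|m s] //=.
  by move=> _; case: (r x m).
  by move=> _; case: ifP.
case: c => [|h t] //= /and3P [Hs Hhd HT'].
have [Hxh|Hxh] := boolP (r x h).
  have [Hxm|Hxm] := boolP (r x m).
    rewrite /= ?Hxm /=.
    have [Hhm|Hhm] := boolP (r h m).
      by rewrite /= ?Hhm /= ?Hxh.
    rewrite ?(negbTE Hhm) ?Hhm ?(negbTE Hhd) ?Hhd ?(negbTE Hh1x) ?Hh1x /=; have [-> ->] := low_nil' rt Hs Hhm.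
    by rewrite /= ?Hxm.
  have Hhm : ~~ r h m.
    apply/negP => Hhm; move/negP: Hxm; apply; exact: rt Hxh Hhm.
  have [E1 E2] := low_nil' rt Hs Hhm.
  rewrite /= ?(negbTE Hxm) E1 E2 /= ?(negbTE Hhm) ?Hhm /= ?(negbTE Hxm).
  congr (_ :: _).
  case: T' Hhd HT' {IH} => [|[|h1 t1] T''] //= Hhd.
    by move=> _; rewrite /= ?Hxh.
  move=> /and3P [Hs1 _ _].
  have Hh1x : ~~ r h1 x.
    apply/negP => H; move/negP: Hhd; apply; exact: rt H Hxh.
  rewrite ?(negbTE Hhm) ?Hhm ?(negbTE Hhd) ?Hhd ?(negbTE Hh1x) ?Hh1x /=; have [-> ->] := low_nil' rt Hs1 Hhd.
  rewrite ?(negbTE Hhm) ?Hhm ?(negbTE Hhd) ?Hhd ?(negbTE Hh1x) ?Hh1x /=; have [-> ->] := low_nil' rt Hs1 Hh1x.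
  by rewrite /= ?Hxh.
rewrite /= ?(IH _ HT').
have [Hhm|Hhm] := boolP (r h m).
  by rewrite /= ?Hhm /= (negbTE Hxh).
rewrite ?(negbTE Hhm) ?Hhm ?(negbTE Hhd) ?Hhd ?(negbTE Hh1x) ?Hh1x /=; have [-> ->] := low_nil' rt Hs Hhm.
by rewrite /= ?(negbTE (nrt _ _ _ Hxh Hhm)).
Qed.

Lemma ins_valid (r : rel nat) (rt : transitive r) T x :
  valid r T -> valid r (ins r x T).
Proof.
elim: T => [|c T' IH] //=.
case: c => [|h t] //= /and3P [Hs Hhd HT'].
have [Hxh|Hxh] := boolP (r x h).
  rewrite /= ?Hxh Hs HT' /= andbT.
  case: T' Hhd {IH HT'} => [|c' T''] //= Hhd.
  apply/negP => H; move/negP: Hhd; apply; exact: rt H Hxh.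
rewrite /= ?Hs (IH HT') /= andbT.
case: T' Hhd HT' {IH} => [|[|h1 t1] T''] //= Hhd /and3P [_ _ _].
by case: (r x h1).
Qed.

Lemma F_valid (r : rel nat) (rt : transitive r) T u :
  valid r T -> valid r (F r T u).
Proof. elim: u T => [|a u IH] T //= HT; apply: IH; exact: ins_valid. Qed.

Lemma F_bump (r : rel nat) (rt : transitive r)
  (nrt : forall x y z, ~~ r x y -> ~~ r y z -> ~~ r x z) T S u :
  valid r T -> F r (bump r T S) u = bump r (F r T u) S.
Proof.
elim: u T => [|a u IH] T //= HT.
rewrite -(comm rt nrt) //; apply: IH; exact: ins_valid.
Qed.

Lemma F_cons (r : rel nat) (rt : transitive r)
  (nrt : forall x y z, ~~ r x y -> ~~ r y z -> ~~ r x z) a u :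
  F r [::] (a :: u) = bump r (F r [::] u) [:: a].
Proof.
rewrite -(F_bump rt nrt) //.
Qed.

Lemma F_congr (r : rel nat) (rt : transitive r)
  (nrt : forall x y z, ~~ r x y -> ~~ r y z -> ~~ r x z) :
  congruence_on_words (fun u v => F r [::] u = F r [::] v).
Proof.
split; [by [] | by move=> *; congruence | by move=> *; congruence | ].
move=> u v w w' _ _ _ _ Huv.
have F_cat T a b : F r T (a ++ b) = F r (F r T a) b.
  by elim: a T => [|x a IH] T //=; rewrite IH.
rewrite !catA (F_cat _ (w ++ u)) (F_cat _ (w ++ v)).
suff -> : F r [::] (w ++ u) = F r [::] (w ++ v) by [].
elim: w => [|a w IH] //.
by rewrite !(F_cons rt nrt) IH.
Qed.

End Gen.

Lemma Rl_F u : Rl u = F ltn [::] u.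
Proof.
rewrite /Rl /F; elim: u [::] => [|a u IH] B //=.
rewrite IH; congr foldl; elim: B => [|c B IHB] //=.
by rewrite IHB.
Qed.

Lemma Rr_F u : Rr u = F leq [::] u.
Proof.
rewrite /Rr /F; elim: u [::] => [|a u IH] B //=.
rewrite IH; congr foldl; elim: B => [|c B IHB] //=.
by rewrite IHB.
Qed.

Lemma cong_ext (R R' : word -> word -> Prop) :
  (forall u v, R u v <-> R' u v) -> congruence_on_words R' -> congruence_on_words R.
Proof.
move=> E [H1 H2 H3 H4]; split.
- by move=> u Hu; apply/E; apply: H1.
- by move=> u v Hu Hv /E H; apply/E; apply: H2.
- by move=> u v w Hu Hv Hw /E H /E H'; apply/E; apply: (H3 u v w).
- by move=> u v w w' Hu Hv Hw Hw' /E H; apply/E; apply: H4.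
Qed.

Theorem proposition3p21 :
  congruence_on_words lps_equiv /\ congruence_on_words rps_equiv.
Proof.
split.
- apply: (cong_ext (R' := fun u v => F ltn [::] u = F ltn [::] v)).
    by move=> u v; rewrite /lps_equiv !Rl_F.
  apply: F_congr; first exact: ltn_trans.
  move=> x y z /=; lia.
- apply: (cong_ext (R' := fun u v => F leq [::] u = F leq [::] v)).
    by move=> u v; rewrite /rps_equiv !Rr_F.
  apply: F_congr; first exact: leq_trans.
  move=> x y z /=; lia.
Qed.
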